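(* Let $\mathbf{k}$ be a commutative domain of characteristic zero, and let $\omega=xy-(\phi(x)+y\psi(x))\in\mathcal{T}$ with $\phi,\psi\in\mathbf{k}[x]$. The following are equivalent: (a) for every $\lambda\in\mathbf{k}$ and every commutative Rota-Baxter $\mathbf{k}$-algebra $(R,P)$ of weight $\lambda$, the $\omega$-cover $\widetilde{P}$ of $P$ on the $\lambda$-Hurwitz series algebra $(R^{\mathbb{N}},\partial_R)$ is again a Rota-Baxter operator of weight $\lambda$; (b) $\omega\in\mathcal{T}_{\mathbf{k}}:=\{xy,\ xy-1,\ xy-yx\}$.
   Context: All algebras are commutative $\mathbf{k}$-algebras with identity. $\mathbf{k}\langle x,y\rangle$ is the noncommutative polynomial algebra and $\mathcal{T}:=\{xy-(\phi(x)+y\psi(x))\mid \phi,\psi\in\mathbf{k}[x]\}$. For $\lambda\in\mathbf{k}$, a Rota-Baxter operator of weight $\lambda$ on an algebra $R$ is a $\mathbf{k}$-linear $P:R\to R$ with $P(x)P(y)=P(P(x)y)+P(xP(y))+\lambda P(xy)$ for all $x,y\in R$. For an algebra $R$, $R^{\mathbb{N}}$ is the set of sequences $f=(f_n)_{n\in\mathbb N}$ in $R$ with componentwise module structure and the $\lambda$-Hurwitz product $(fg)_n=\sum_{k=0}^{n}\sum_{j=0}^{n-k}\binom{n}{k}\binom{n-k}{j}\lambda^k f_{n-j}g_{k+j}$; $\partial_R:R^{\mathbb N}\to R^{\mathbb N}$ is $(\partial_R f)_n=f_{n+1}$. Write $\phi(x)=\sum_{i=0}^r a_ix^i$, $\psi(x)=\sum_{j=0}^s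 b_jx^j$. Given a linear operator $P$ on $R$, the $\omega$-cover of $P$ is the unique linear operator $\widetilde P$ on $R^{\mathbb N}$ with $\widetilde P(f)_0=P(f_0)$ and $\partial_R\widetilde P=\phi(\partial_R)+\widetilde P\psi(\partial_R)$; equivalently, writing $\widetilde P_n(f):=\widetilde P(f)_n$, for all $n\ge1$: $\widetilde P_n(f)=\sum_{i=0}^r a_i f_{n-1+i}+\sum_{j=0}^s b_j\widetilde P_{n-1}(\partial_R^j f)$. *)

(* Defs.v *)
From HB Require Import structures.
From mathcomp Require Import all_boot all_order all_algebra.
Set Implicit Arguments. Unset Strict Implicit. Unset Printing Implicit Defensive.
Import Order.TTheory GRing.Theory Num.Theory.
Local Open Scope ring_scope.

Section Defs.
Variable k : idomainType.
Variable R : comAlgType k.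

Definition is_RB_op (lam : k) (P : R -> R) : Prop :=
  (forall (a : k) (u v : R), P (a *: u + v) = a *: P u + P v) /\
  (forall u v : R, P u * P v = P (P u * v) + P (u * P v) + lam *: P (u * v)).

Definition seq_add (f g : nat -> R) : nat -> R := fun n => f n + g n.
Definition seq_scale (a : k) (f : nat -> R) : nat -> R := fun n => a *: f n.

Definition hurwitz_mul (lam : k) (f g : nat -> R) : nat -> R :=
  fun n => \sum_(i < n.+1) \sum_(j < (n - i)%N.+1)
     ((lam ^+ i *: (f (n - j)%N * g (i + j)%N)) *+ ('C(n, i) * 'C(n - i, j))%N).

Definition seq_shift (f : nat -> R) : nat -> R := fun n => f n.+1.

Fixpoint omega_cover_n (phi psi : {poly k}) (P : R -> R) (n : nat) (f : nat -> R) : R :=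
  match n with
  | 0 => P (f 0%N)
  | n'.+1 => \sum_(i < size phi) phi`_i *: f (n' + i)%N
             + \sum_(j < size psi) psi`_j *: omega_cover_n phi psi P n' (fun m => f (m + j)%N)
  end.

Definition omega_cover (phi psi : {poly k}) (P : R -> R) (f : nat -> R) : nat -> R :=
  fun n => omega_cover_n phi psi P n f.

Definition is_RB_seq_op (lam : k) (Q : (nat -> R) -> (nat -> R)) : Prop :=
  forall (f g : nat -> R) (n : nat),
    hurwitz_mul lam (Q f) (Q g) n =
    seq_add (seq_add (Q (hurwitz_mul lam (Q f) g)) (Q (hurwitz_mul lam f (Q g))))
            (seq_scale lam (Q (hurwitz_mul lam f g))) n.
End Defs.

(* Main.v *)
Require Import Defs.
From HB Require Import structures.
From mathcomp Require Import all_boot all_order all_algebra ring zify.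
From Stdlib Require Import FunctionalExtensionality.
Import GRing.Theory.
Local Open Scope ring_scope.

Section Hurwitz.
Variable k : idomainType.
Variable R : comAlgType k.
Variable lam : k.
Implicit Types f g : nat -> R.

Definition hterm f g n (i j : nat) : R :=
  (lam ^+ i *: (f (n - j)%N * g (i + j)%N)) *+ ('C(n, i) * 'C(n - i, j))%N.

Lemma hurwitz_sq f g n N1 N2 : (n < N1)%N -> (n < N2)%N ->
  hurwitz_mul lam f g n = \sum_(i < N1) \sum_(j < N2) hterm f g n i j.
Proof.
move=> h1 h2; rewrite /hurwitz_mul.
rewrite (big_ord_widen N1 (fun i => \sum_(j < (n - i).+1) hterm f g n i j) h1).
rewrite big_mkcond; apply: eq_bigr => i _; case: ifP => hi.
  have h3 : ((n - i).+1 <= N2)%N by exact: (leq_ltn_trans (leq_subr i n) h2).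
  rewrite (big_ord_widen N2 (fun j => hterm f g n i j) h3) big_mkcond.
  apply: eq_bigr => j _; case: ifP => hj //.
  by rewrite /hterm (@bin_small (n - i) j) ?muln0 ?mulr0n // ltnNge; move: hj; rewrite ltnS => ->.
rewrite big1 // => j _.
by rewrite /hterm bin_small ?mul0n ?mulr0n // ltnNge; move: hi; rewrite ltnS => ->.
Qed.

Lemma pascal3 n i j : ('C(n.+1, i) * 'C(n.+1 - i, j) =
  'C(n,i)*'C(n-i,j) + (if j is j'.+1 then 'C(n,i)*'C(n-i,j') else 0)
  + (if i is i'.+1 then 'C(n,i')*'C(n - i', j) else 0))%N.
Proof.
case: i => [|i]; case: j => [|j].
- by rewrite !bin0 !muln1 !addn0.
- by rewrite !bin0 !mul1n !subn0 binS addn0.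
- by rewrite !bin0 !muln1 binS addn0.
rewrite subSS binS mulnDl -addnA [X in _ = X]addnA -mulnDr; congr (_ + _)%N.
have [lt_in|le_ni] := ltnP i n.
  by rewrite -(subnSK lt_in) binS addnC.
by rewrite bin_small ?mul0n // ltnS.
Qed.

Lemma hurwitzS f g n : hurwitz_mul lam f g n.+1 =
  hurwitz_mul lam (seq_shift f) g n + hurwitz_mul lam f (seq_shift g) n
  + lam *: hurwitz_mul lam (seq_shift f) (seq_shift g) n.
Proof.
rewrite (hurwitz_sq f g n.+1 n.+2 n.+2) //.
rewrite (hurwitz_sq (seq_shift f) g n n.+2 n.+2) //.
rewrite (hurwitz_sq f (seq_shift g) n n.+2 n.+1) //.
rewrite (hurwitz_sq (seq_shift f) (seq_shift g) n n.+1 n.+2) //.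
rewrite /hterm.
under eq_bigr => i _ do under eq_bigr => j _ do rewrite pascal3 !mulrnDr.
under eq_bigr => i _ do rewrite !big_split /=.
rewrite !big_split /=.
congr (_ + _ + _).
- apply: eq_bigr => i _; apply: eq_bigr => j _.
  have [hj|hj] := leqP j n; first by rewrite /seq_shift subSn.
  by rewrite (@bin_small (n - i) j) ?muln0 ?mulr0n // (leq_ltn_trans (leq_subr i n) hj).
- apply: eq_bigr => i _; rewrite big_ord_recl /= mulr0n add0r.
  apply: eq_bigr => j _; by rewrite /bump /= add1n subSS addnS add0n.
- rewrite big_ord_recl /= big1 ?add0r; last by move=> j _; rewrite mulr0n.
  rewrite scaler_sumr; apply: eq_bigr => i _; rewrite /bump /= add1n scaler_sumr.
  apply: eq_bigr => j _.
  rewrite -scalerMnr scalerA -exprS /seq_shift addSn.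
  have [hj|hj] := leqP j n; first by rewrite subSn.
  by rewrite (@bin_small (n - i) j) ?muln0 ?mulr0n // (leq_ltn_trans (leq_subr i n) hj).
Qed.


Definition e0 : nat -> R := fun m => if m == 0%N then 1 else 0.
Definition e1 : nat -> R := fun m => if m == 1%N then 1 else 0.
Definition zs : nat -> R := fun _ => 0.
Definition Ex (r q : R) : nat -> R := fun m => r * q ^+ m.

Lemma hurwitz0 f g : hurwitz_mul lam f g 0 = f 0%N * g 0%N.
Proof. by rewrite /hurwitz_mul !big_ord1 /= expr0 scale1r mulr1n. Qed.

Lemma hurwitz_zr f n : hurwitz_mul lam f zs n = 0.
Proof. by rewrite /hurwitz_mul big1 // => i _; rewrite big1 // => j _; rewrite /zs mulr0 scaler0 mul0rn. Qed.

Lemma hurwitz_zl f n : hurwitz_mul lam zs f n = 0.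
Proof. by rewrite /hurwitz_mul big1 // => i _; rewrite big1 // => j _; rewrite /zs mul0r scaler0 mul0rn. Qed.

Lemma shift_e0 : seq_shift e0 = zs.
Proof. by apply: functional_extensionality => m. Qed.

Lemma shift_e1 : seq_shift e1 = e0.
Proof. by apply: functional_extensionality => m. Qed.

Lemma hurwitz_e0r f n : hurwitz_mul lam f e0 n = f n.
Proof.
elim: n f => [|n IH] f; first by rewrite hurwitz0 /e0 /= mulr1.
by rewrite hurwitzS shift_e0 !hurwitz_zr scaler0 !addr0 IH.
Qed.

Lemma hurwitz_e0l f n : hurwitz_mul lam e0 f n = f n.
Proof.
elim: n f => [|n IH] f; first by rewrite hurwitz0 /e0 /= mul1r.
by rewrite hurwitzS shift_e0 !hurwitz_zl scaler0 addr0 add0r IH.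
Qed.

Lemma hurwitz1 f g : hurwitz_mul lam f g 1 =
  f 1%N * g 0%N + f 0%N * g 1%N + lam *: (f 1%N * g 1%N).
Proof. by rewrite hurwitzS !hurwitz0. Qed.

Lemma hurwitz_e1r h n : hurwitz_mul lam h e1 n = (h n.-1 + lam *: h n) *+ n.
Proof.
elim: n h => [|n IH] h; first by rewrite hurwitz0 /e1 /= mulr0.
rewrite hurwitzS shift_e1 !hurwitz_e0r IH /seq_shift.
case: n {IH} => [|n] /=; first by rewrite !mulr0n !add0r.
by rewrite [in RHS]mulrSr addrA.
Qed.

Lemma shift_Ex r q : seq_shift (Ex r q) = Ex (r * q) q.
Proof. by apply: functional_extensionality => m; rewrite /seq_shift /Ex exprS mulrA. Qed.

Lemma hurwitz_Ex r s p q n : hurwitz_mul lam (Ex r p) (Ex s q) n =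
  r * s * (p + q + lam *: (p * q)) ^+ n.
Proof.
elim: n r s => [|n IH] r s; first by rewrite hurwitz0 /Ex !expr0 !mulr1.
rewrite hurwitzS !shift_Ex !IH exprS mulrA.
set X := (_ ^+ n); rewrite scalerAl -!mulrDl [RHS]mulrA; congr (_ * _).
rewrite !mulrDr -scalerAr; congr (_ + _ + _).
- by rewrite mulrAC.
- by rewrite !mulrA (mulrAC r p s).
Qed.

End Hurwitz.
Arguments e0 {k R}.
Arguments e1 {k R}.
Arguments zs {k R}.
Arguments Ex {k R}.


Section Backward.
Variable k : idomainType.
Variable R : comAlgType k.
Variable lam : k.
Variable P : R -> R.
Hypothesis hP : is_RB_op lam P.

Lemma P0 : P 0 = 0.
Proof.
have h := hP.1 1 0 0; rewrite !scale1r addr0 in h.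
by apply: (addrI (P 0)); rewrite addr0 -h.
Qed.
Lemma PD u v : P (u + v) = P u + P v.
Proof. by have := hP.1 1 u v; rewrite !scale1r. Qed.
Lemma PZ a u : P (a *: u) = a *: P u.
Proof. by have := hP.1 a u 0; rewrite !addr0 P0 addr0. Qed.

Lemma RB_base phi psi f g : hurwitz_mul lam (omega_cover phi psi P f) (omega_cover phi psi P g) 0 =
    seq_add (seq_add (omega_cover phi psi P (hurwitz_mul lam (omega_cover phi psi P f) g))
       (omega_cover phi psi P (hurwitz_mul lam f (omega_cover phi psi P g))))
            (seq_scale lam (omega_cover phi psi P (hurwitz_mul lam f g))) 0.
Proof. rewrite /seq_add /seq_scale /omega_cover /= !hurwitz0 /=; exact: hP.2. Qed.

Lemma case1 : is_RB_seq_op lam (omega_cover 0 0 P).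
Proof.
have Q0 : forall f n, omega_cover_n 0 0 P n.+1 f = 0.
  by move=> f n; rewrite /= size_poly0 !big_ord0 addr0.
have sQ : forall f, seq_shift (omega_cover 0 0 P f) = zs.
  by move=> f; apply: functional_extensionality => m; rewrite /seq_shift /omega_cover Q0.
move=> f g [|n]; first exact: RB_base.
rewrite hurwitzS !sQ !hurwitz_zl !hurwitz_zr scaler0 !addr0.
by rewrite /seq_add /seq_scale /omega_cover !Q0 scaler0 !addr0.
Qed.

Lemma case2 : is_RB_seq_op lam (omega_cover 1 0 P).
Proof.
have Q0 : forall f n, omega_cover_n 1 0 P n.+1 f = f n.
  move=> f n; rewrite /= size_poly0 size_poly1 big_ord0 big_ord1 addr0 addn0.
  by rewrite coefC /= scale1r.
have sQ : forall f, seq_shift (omega_cover 1 0 P f) = f.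
  by move=> f; apply: functional_extensionality => m; rewrite /seq_shift /omega_cover Q0.
move=> f g [|n]; first exact: RB_base.
rewrite hurwitzS !sQ.
by rewrite /seq_add /seq_scale /omega_cover !Q0 (addrC (hurwitz_mul _ f _ _)).
Qed.

Lemma transp3 (x1 x2 x3 x4 x5 x6 x7 x8 x9 : R) :
  x1 + x2 + x3 + (x4 + x5 + x6) + (x7 + x8 + x9) =
  x1 + x4 + x7 + (x2 + x5 + x8) + (x3 + x6 + x9).
Proof.
by rewrite (addrACA (x1+x2)) (addrACA x1) (addrACA (x1+x4+(x2+x5))) (addrACA (x1+x4)).
Qed.

Lemma alg9 (a1 a2 a3 b1 b2 b3 c1 c2 c3 : R) :
  a1 + a2 + lam *: a3 + (b1 + b2 + lam *: b3) + lam *: (c1 + c2 + lam *: c3) =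
  a1 + b1 + lam *: c1 + (a2 + b2 + lam *: c2) + lam *: (a3 + b3 + lam *: c3).
Proof. by rewrite !scalerDr !scalerA transp3. Qed.

Lemma case3 : is_RB_seq_op lam (omega_cover 0 'X P).
Proof.
have Q0 : forall n f, omega_cover_n 0 'X P n f = P (f n).
  elim=> [|n IH] f //=.
  rewrite size_poly0 big_ord0 add0r size_polyX !big_ord_recr big_ord0 /= add0r.
  by rewrite !coefX /= scale0r scale1r add0r IH addn1.
have eQ : omega_cover 0 'X P = fun f n => P (f n).
  by apply: functional_extensionality => f; apply: functional_extensionality => n; rewrite /omega_cover Q0.
rewrite eQ => f g n.
rewrite /seq_add /seq_scale.
elim: n f g => [|n IH] f g; first by rewrite !hurwitz0 hP.2.
rewrite !hurwitzS.
have -> : seq_shift (fun m => P (f m)) = fun m => P (seq_shift f m) by [].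
have -> : seq_shift (fun m => P (g m)) = fun m => P (seq_shift g m) by [].
rewrite !IH !PD !PZ.
exact: alg9.
Qed.

End Backward.

Lemma polyfix (k : idomainType) (p : {poly k}) : p`_0 = 0 -> p \Po p = p -> p = 0 \/ p = 'X.
Proof.
move=> h0 hc.
case: (leqP (size p) 1) => hs.
  by left; rewrite (size1_polyC hs) h0.
have hd := size_comp_poly p p; rewrite hc in hd.
have s2 : size p = 2%N.
  move: hd hs; case: (size p) => [|[|d]] //= hd _; nia.
set b := p`_1.
have hpX : p = b *: 'X.
  apply/polyP => -[|[|i]]; rewrite coefZ coefX /= ?mulr0 ?mulr1 //.
  by rewrite nth_default // s2.
have hb : b != 0.
  by have := lead_coef_eq0 p; rewrite /lead_coef s2 => ->; rewrite -size_poly_eq0 s2.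
right; move: hc; rewrite hpX comp_polyZ comp_polyX scalerA => hc.
have : (b * b) = b.
  by have := congr1 (fun q : {poly k} => q`_1) hc; rewrite /= !coefZ coefX /= !mulr1.
move/eqP; rewrite -{3}(mulr1 b) (inj_eq (mulfI hb)) => /eqP hb1.
by rewrite hb1 scale1r.
Qed.

Section Forward.
Variable k : idomainType.
Hypothesis hchar : [pchar k] =i pred0.
Variables phi psi : {poly k}.
Hypothesis HRB : forall (lam : k) (R : comAlgType k) (P : R -> R),
      is_RB_op lam P -> is_RB_seq_op lam (omega_cover phi psi P).

Local Notation PR := {poly k}.

Lemma natmul_eq0 (x : k) n : (x *+ n == 0) = (n == 0%N) || (x == 0).
Proof. by rewrite -mulr_natr mulf_eq0 orbC (pcharf0P _).1. Qed.

Lemma sc0 (v : PR) : (0:k) *: v = 0. Proof. exact: scale0r. Qed.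
Lemma sc1 (v : PR) : (1:k) *: v = v. Proof. exact: scale1r. Qed.

Definition em (m : nat) : nat -> PR := fun i => if i == m then 1 else 0.

Lemma sum_single (p : {poly k}) (F : nat -> PR) m :
  (forall i, i != m -> F i = 0) -> \sum_(i < size p) p`_i *: F i = p`_m *: F m.
Proof.
move=> hF; case: (ltnP m (size p)) => hm.
  rewrite (bigD1 (Ordinal hm)) //= big1 ?addr0 // => i hi.
  by rewrite hF ?scaler0 //; apply: contra hi => /eqP hi; apply/eqP/val_inj.
rewrite big1 ?nth_default ?scale0r // => i _.
by rewrite hF ?scaler0 // neq_ltn (leq_trans (ltn_ord i) hm).
Qed.

Definition Pz : PR -> PR := fun _ => 0.
Lemma RB_P0 lam : is_RB_op lam Pz.
Proof. by split => [a u v|u v]; rewrite /Pz ?scaler0 ?addr0 ?mulr0. Qed.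

Local Notation Q := (omega_cover phi psi Pz).
Local Notation Qn := (omega_cover_n phi psi Pz).

Lemma HA lam f g n : hurwitz_mul lam (Q f) (Q g) n =
   Q (hurwitz_mul lam (Q f) g) n + Q (hurwitz_mul lam f (Q g)) n + lam *: Q (hurwitz_mul lam f g) n.
Proof. by have := @HRB lam _ Pz (RB_P0 lam) f g n; rewrite /seq_add /seq_scale. Qed.

Lemma Qzero n f : (forall m, f m = 0) -> Qn n f = 0.
Proof.
elim: n f => [|n IH] f hf //=.
rewrite big1 ?add0r; last by move=> i _; rewrite hf scaler0.
by rewrite big1 // => j _; rewrite IH ?scaler0.
Qed.

Lemma Q1 F : Qn 1 F = \sum_(i < size phi) phi`_i *: F i.
Proof.
by rewrite /= [X in _ + X]big1 ?addr0 // => j _; rewrite /Pz scaler0.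
Qed.

Lemma hurwitz_e0rF (lam : k) (f : nat -> PR) : hurwitz_mul lam f e0 = f.
Proof. by apply: functional_extensionality => n; rewrite hurwitz_e0r. Qed.
Lemma hurwitz_e0lF (lam : k) (f : nat -> PR) : hurwitz_mul lam e0 f = f.
Proof. by apply: functional_extensionality => n; rewrite hurwitz_e0l. Qed.

Lemma Qe0_0 : Q e0 0 = 0. Proof. by []. Qed.
Lemma Qe0_1 : Q e0 1 = (phi`_0)%:P.
Proof.
rewrite /omega_cover Q1 (sum_single _ _ 0) /e0 /= ?alg_polyC //.
by move=> i /negbTE ->.
Qed.

Lemma a0_01 : phi`_0 = 0 \/ phi`_0 = 1.
Proof.
have E0 := HA 0 e0 e0 1; have E1 := HA 1 e0 e0 1.
rewrite !hurwitz_e0rF !hurwitz_e0lF !hurwitz1 !Qe0_0 !Qe0_1 in E0 E1.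
rewrite !mulr0 !mul0r !add0r !sc0 addr0 in E0.
rewrite !mulr0 !mul0r !add0r !sc1 -E0 add0r in E1.
rewrite -polyCM in E1; move/polyC_inj/eqP: E1.
rewrite -subr_eq0 -{3}(mulr1 phi`_0) -mulrBr mulf_eq0 subr_eq0.
by case/orP => /eqP; [left|right].
Qed.


Lemma Qe0_zero : phi`_0 = 0 -> Q e0 = zs.
Proof.
move=> h0.
have H : forall n j, Qn n (fun m => e0 (m + j)) = 0.
  elim=> [|n IH] j //=.
  rewrite big1 ?add0r.
    rewrite big1 // => l _.
    have -> : (fun m => e0 (m + l + j)) = (fun m => e0 (m + (l + j))) :> (nat -> PR).
      by apply: functional_extensionality => m; rewrite addnA.
    by rewrite IH scaler0.
  case=> [[|i] hi] _ /=; first by rewrite h0 scale0r.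
  by rewrite /e0 addnS addSn scaler0.
apply: functional_extensionality => n; rewrite /omega_cover.
have -> : e0 = (fun m => e0 (m + 0)) :> (nat -> PR).
  by apply: functional_extensionality => m; rewrite addn0.
exact: H.
Qed.

Lemma hurwitz_zrF (lam : k) (f : nat -> PR) : hurwitz_mul lam f zs = zs.
Proof. by apply: functional_extensionality => n; rewrite hurwitz_zr. Qed.

Lemma Qall0 : phi`_0 = 0 -> forall f n, Q f n = 0.
Proof.
move=> h0 f n.
have E0 := HA 0 f e0 n; have E1 := HA 1 f e0 n.
rewrite !Qe0_zero // !hurwitz_zrF !hurwitz_e0rF in E0 E1.
rewrite /zs in E0 E1.
rewrite /omega_cover (Qzero n zs) // addr0 !sc0 addr0 in E0.
rewrite /omega_cover (Qzero n zs) // addr0 !sc1 -E0 add0r in E1.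
by rewrite /omega_cover -E1.
Qed.

Lemma phi0 : phi`_0 = 0 -> phi = 0.
Proof.
move=> h0; apply/polyP => m; rewrite coef0.
have := Qall0 h0 (em m) 1.
rewrite /omega_cover Q1 (sum_single _ _ m) /em ?eqxx; last by move=> i /negbTE ->.
by rewrite alg_polyC => /eqP; rewrite polyC_eq0 => /eqP.
Qed.


Lemma scN1 (v : PR) : (-1:k) *: v = - v. Proof. exact: scaleN1r. Qed.

Lemma QS n F : Qn n.+1 F = \sum_(i < size phi) phi`_i *: F (n + i)%N
   + \sum_(j < size psi) psi`_j *: Qn n (fun m => F (m + j)%N).
Proof. by []. Qed.

Lemma Qe0_2 : phi`_0 = 1 -> Q e0 2 = (psi`_0)%:P.
Proof.
move=> h1; rewrite /omega_cover QS big1 ?add0r; last by move=> i _; rewrite /e0 add1n scaler0.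
have inner : forall j, Qn 1 (fun m => e0 (m + j)) = e0 j.
  move=> j; rewrite Q1 (sum_single _ (fun i => e0 (i + j)) 0) ?h1 ?scale1r //.
  by case=> [//|i] _ /=.
under eq_bigr => j _ do rewrite inner.
rewrite (sum_single _ e0 0) /e0 /= ?alg_polyC //.
by case=> [//|i] _ /=.
Qed.

Lemma key4 (L1 R1 L2 R2 : PR) : L1 = R1 -> L2 = R2 -> 0 = L1 - L2 - (R1 - R2).
Proof. by move=> -> ->; rewrite subrr. Qed.

Lemma b0_0 : phi`_0 = 1 -> psi`_0 = 0.
Proof.
move=> h1.
have E1 := HA 1 e0 e0 2; have E2 := HA (-1) e0 e0 2.
rewrite !hurwitz_e0rF !hurwitz_e0lF hurwitzS !hurwitz1 /seq_shift !Qe0_0 !Qe0_1 !Qe0_2 // h1 in E1.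
rewrite !hurwitz_e0rF !hurwitz_e0lF hurwitzS !hurwitz1 /seq_shift !Qe0_0 !Qe0_1 !Qe0_2 // h1 in E2.
rewrite !sc1 in E1; rewrite !scN1 in E2.
have := key4 _ _ _ _ E1 E2.
set b := (psi`_0)%:P; set X := Q (Q e0) 2.
rewrite polyC1 => h.
have : b *+ 6 = 0 by rewrite h; ring.
rewrite /b -polyCMn => /eqP; rewrite polyC_eq0 natmul_eq0 /= => /eqP //.
Qed.


Lemma Qe0_e1 : phi`_0 = 1 -> psi`_0 = 0 -> Q e0 = e1.
Proof.
move=> h1 h0; apply: functional_extensionality => -[|[|n]].
- by [].
- by rewrite Qe0_1 h1 polyC1.
rewrite /omega_cover QS big1 ?add0r; last by move=> i _; rewrite /e0 addSn scaler0.
rewrite big1 // => j _; case: (posnP j) => hj; first by rewrite hj h0 scale0r.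
by rewrite Qzero ?scaler0 // => m; rewrite /e0 addn_eq0 (negbTE (lt0n_neq0 hj)) andbF.
Qed.

Lemma Qf0 (f : nat -> PR) : Q f 0 = 0. Proof. by []. Qed.

Lemma QHe1 (lam : k) (f : nat -> PR) : Q (hurwitz_mul lam f e1) 1 =
  \sum_(i < size phi) phi`_i *: ((f i.-1 + lam *: f i) *+ i).
Proof. by rewrite /omega_cover Q1; apply: eq_bigr => i _; rewrite hurwitz_e1r. Qed.

Lemma sumsplit (p : {poly k}) (u v : nat -> PR) (c : k) :
  \sum_(i < size p) p`_i *: ((u i + c *: v i) *+ i) =
  \sum_(i < size p) p`_i *: (u i *+ i) + c *: \sum_(i < size p) p`_i *: (v i *+ i).
Proof.
rewrite scaler_sumr -big_split; apply: eq_bigr => i _.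
by rewrite mulrnDl scalerDr scalerMnr !scalerA mulrC.
Qed.

Lemma lin_elim (A Su Sv B : PR) : 0 = A + Su -> B = A + (Su + Sv) + B -> Sv = 0.
Proof.
move=> h0; rewrite addrA -h0 add0r -{1}(add0r B) => /addIr h.
by rewrite h.
Qed.

Lemma phi1 : phi`_0 = 1 -> phi = 1.
Proof.
move=> h1; have h0 := b0_0 h1.
apply/polyP => m; rewrite coef1.
case: m => [|m]; first by rewrite h1.
have E0 := HA 0 (em m.+1) e0 1; have E1 := HA 1 (em m.+1) e0 1.
rewrite Qe0_e1 // !hurwitz_e0rF hurwitz_e1r Qf0 in E0.
rewrite Qe0_e1 // !hurwitz_e0rF hurwitz_e1r Qf0 in E1.
rewrite QHe1 /omega_cover !Q1 (sumsplit phi (fun i => em m.+1 i.-1) (em m.+1)) !sc0 !addr0 mulr1n in E0.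
rewrite QHe1 /omega_cover !Q1 (sumsplit phi (fun i => em m.+1 i.-1) (em m.+1)) !sc1 add0r mulr1n in E1.
have := lin_elim _ _ _ _ E0 E1.
rewrite (sum_single _ (fun i => em m.+1 i *+ i) m.+1); last by move=> i /negbTE h; rewrite /em h mul0rn.
rewrite /em eqxx -scaler_nat scalerA alg_polyC => /eqP; rewrite polyC_eq0 mulf_eq0.
by rewrite (pcharf0P _).1 // orbF => /eqP.
Qed.


Lemma Q1one F : phi = 1 -> Qn 1 F = F 0%N.
Proof. by move=> hp; rewrite Q1 hp size_poly1 big_ord1 coef1 /= scale1r. Qed.

Lemma Q2 F : phi = 1 -> Qn 2 F = F 1%N + \sum_(j < size psi) psi`_j *: F j.
Proof.
move=> hp; rewrite QS; congr (_ + _).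
  by rewrite hp size_poly1 big_ord1 coef1 /= scale1r.
by apply: eq_bigr => j _; rewrite Q1one.
Qed.

Lemma b1_0 : phi = 1 -> psi`_1 = 0.
Proof.
move=> hp; have h1 : phi`_0 = 1 by rewrite hp coef1.
have h0 := b0_0 h1.
have E := HA 0 e0 e0 2.
rewrite Qe0_e1 // hurwitz_e0rF hurwitz_e0lF hurwitz_e1r /omega_cover !Q2 // in E.
rewrite (sum_single _ e1 1) in E; last by move=> i /negbTE h; rewrite /e1 h.
rewrite /= /e1 /= !sc0 addr0 !addr0 alg_polyC in E.
set b := (psi`_1)%:P in E.
have : b *+ 2 = (1 + b + (1 + b)) - 2 by ring.
rewrite -E subrr /b -polyCMn => /eqP; rewrite polyC_eq0 natmul_eq0 /= => /eqP //.
Qed.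


Lemma QHe1_2 (lam : k) (f : nat -> PR) : phi = 1 -> Q (hurwitz_mul lam f e1) 2 =
  (f 0%N + lam *: f 1%N) *+ 1 + \sum_(j < size psi) psi`_j *: ((f j.-1 + lam *: f j) *+ j).
Proof.
move=> hp; rewrite /omega_cover Q2 // hurwitz_e1r; congr (_ + _).
by apply: eq_bigr => j _; rewrite hurwitz_e1r.
Qed.

Lemma psi0 : phi = 1 -> psi = 0.
Proof.
move=> hp; have h1 : phi`_0 = 1 by rewrite hp coef1.
have h0 := b0_0 h1.
apply/polyP => -[|[|m]]; rewrite coef0; first exact: h0; first exact: b1_0.
set f := em m.+2.
have E0 := HA 0 f e0 2; have E1 := HA 1 f e0 2.
rewrite Qe0_e1 // hurwitz_e0rF hurwitz_e1r QHe1_2 // /omega_cover !Q2 // Q1one //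
   (sumsplit psi (fun i => f i.-1) f) in E0.
rewrite Qe0_e1 // !hurwitz_e0rF hurwitz_e1r QHe1_2 // /omega_cover !Q2 // Q1one //
   (sumsplit psi (fun i => f i.-1) f) in E1.
rewrite !sc0 in E0; rewrite !sc1 in E1.
have := key4 _ _ _ _ E1 E0.
set T := \sum_(j < size psi) psi`_j *: f j.
set Sv := \sum_(i < size psi) psi`_i *: (f i *+ i).
move=> h; have : T - Sv = 0 by rewrite h; ring.
move/eqP; rewrite subr_eq0 /T /Sv.
rewrite (sum_single _ f m.+2); last by move=> i /negbTE h'; rewrite /f /em h'.
rewrite (sum_single _ (fun i => f i *+ i) m.+2); last by move=> i /negbTE h'; rewrite /f /em h' mul0rn.
rewrite /f /em eqxx -scalerMnr scalerMnl !alg_polyC => hh; move/eqP/polyC_inj/eqP: hh.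
by rewrite mulrS -subr_eq0 opprD addrA subrr sub0r oppr_eq0 natmul_eq0 /= => /eqP.
Qed.


Definition Pc (c : k) : PR -> PR := fun u => c%:P * u.

Lemma RB_Pc c : is_RB_op (- c) (Pc c).
Proof.
split => [a u v|u v]; rewrite /Pc; first by rewrite mulrDr scalerAr.
rewrite -mul_polyC polyCN; ring.
Qed.

Lemma HB c f g n : hurwitz_mul (-c) (omega_cover phi psi (Pc c) f) (omega_cover phi psi (Pc c) g) n =
   omega_cover phi psi (Pc c) (hurwitz_mul (-c) (omega_cover phi psi (Pc c) f) g) n
 + omega_cover phi psi (Pc c) (hurwitz_mul (-c) f (omega_cover phi psi (Pc c) g)) n
 + (-c) *: omega_cover phi psi (Pc c) (hurwitz_mul (-c) f g) n.
Proof. by have := @HRB (-c) _ (Pc c) (RB_Pc c) f g n; rewrite /seq_add /seq_scale. Qed.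

Lemma Qexp c : phi = 0 -> forall n (r q : PR),
  omega_cover_n phi psi (Pc c) n (Ex r q) = c%:P * (r * (psi \Po q) ^+ n).
Proof.
move=> hp; elim=> [|n IH] r q; first by rewrite /= /Pc /Ex !expr0.
rewrite [LHS]/= (_ : size phi = 0%N) ?big_ord0 ?add0r; last by rewrite hp size_poly0.
have e : forall j, (fun m => Ex r q (m + j)%N) = Ex (r * q ^+ j) q.
  by move=> j; apply: functional_extensionality => m; rewrite /Ex exprD (mulrC (q ^+ m)) mulrA.
under eq_bigr => j _ do rewrite e IH.
rewrite exprSr comp_polyE !mulr_sumr; apply: eq_bigr => j _.
set Y := (_ ^+ n); rewrite -!mul_polyC; ring.
Qed.

Lemma QEx c : phi = 0 -> forall r q : PR,
  omega_cover phi psi (Pc c) (Ex r q) = Ex (c%:P * r) (psi \Po q).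
Proof.
by move=> hp r q; apply: functional_extensionality => n; rewrite /omega_cover Qexp // /Ex mulrA.
Qed.

Lemma hurwitz_ExF (lam : k) (r s p q : PR) :
  hurwitz_mul lam (Ex r p) (Ex s q) = Ex (r * s) (p + q + lam *: (p * q)).
Proof. by apply: functional_extensionality => n; rewrite hurwitz_Ex. Qed.


Lemma key5 (L1 R1 L2 R2 : PR) (a b : PR) : L1 = R1 -> L2 = R2 -> 0 = a * (L1 - R1) + b * (L2 - R2).
Proof. by move=> -> ->; rewrite !subrr !mulr0 addr0. Qed.

Lemma b0_phi0 : phi = 0 -> psi`_0 = 0.
Proof.
move=> hp.
have E1 := HB 1 (Ex 1 0) (Ex 1 0) 1; have E2 := HB 2 (Ex 1 0) (Ex 1 0) 1.
rewrite !QEx // comp_poly0r !hurwitz_ExF !mulr0 !mul0r !scaler0 !addr0 !add0r !QEx // comp_poly0r /Ex !expr1 in E1.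
rewrite !QEx // comp_poly0r !hurwitz_ExF !mulr0 !mul0r !scaler0 !addr0 !add0r !QEx // comp_poly0r /Ex !expr1 in E2.
rewrite -!mul_polyC !polyCN !polyC1 in E1.
rewrite -!mul_polyC !polyCN !polyCMn !polyC1 in E2.
set b := (psi`_0)%:P in E1 E2.
have := key5 _ _ _ _ 4 (-1) E1 E2.
set g := psi \Po b => h.
have : (b * b) *+ 4 = 0 by rewrite h; ring.
rewrite /b -polyCM -polyCMn => /eqP; rewrite polyC_eq0 natmul_eq0 /= mulf_eq0 orbb => /eqP //.
Qed.


Lemma comp_phi0 : phi = 0 -> psi \Po psi = psi.
Proof.
move=> hp; have h0 := b0_phi0 hp.
have E := HB 1 (Ex 1 'X) (Ex 1 0) 1.
rewrite !QEx // comp_polyXr comp_poly0r h0 polyC0 !hurwitz_ExF ?mulr0 ?mul0r ?scaler0 ?addr0 ?add0r !QEx // ?comp_polyXr ?comp_poly0r ?h0 ?polyC0 /Ex !expr1 in E.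
rewrite -!mul_polyC !polyCN !polyC1 in E.
have := key5 _ _ _ _ (-1) 0 E E.
set g := psi \Po psi => h.
apply/eqP; rewrite -subr_eq0; apply/eqP.
by rewrite h; ring.
Qed.


Lemma forward_main : [\/ (phi = 0 /\ psi = 0), (phi = 1 /\ psi = 0) | (phi = 0 /\ psi = 'X)].
Proof.
case: a0_01 => h.
  have hp := phi0 h.
  by case: (polyfix _ _ (b0_phi0 hp) (comp_phi0 hp)) => ->; [apply: Or31 | apply: Or33].
have hp := phi1 h.
by apply: Or32; split => //; apply: psi0.
Qed.

End Forward.

Theorem theorem3p1 (k : idomainType) (hchar : [pchar k] =i pred0)
    (phi psi : {poly k}) :
  (forall (lam : k) (R : comAlgType k) (P : R -> R),
      is_RB_op lam P -> is_RB_seq_op lam (omega_cover phi psi P))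
  <->
  [\/ (phi = 0 /\ psi = 0), (phi = 1 /\ psi = 0) | (phi = 0 /\ psi = 'X)].
Proof.
split; first exact: forward_main.
case=> -[-> ->] lam R P hP; [exact: case1 | exact: case2 | exact: case3].
Qed.
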